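(* Let $Q=[u_1,\dots,u_n]\subset\mathbb{S}^2$ with $n\ge 7$ be a spherical polygon not contained in any closed hemisphere, without self-intersections and antipodal intersections, with exactly two essential vertices $u_i,u_j$, and let $u_k,u_l$ be nonessential vertices such that $\{u_i,u_j,u_k,u_l\}$ is not contained in any closed hemisphere. Then the spherical convex hull of the set of nonessential vertices of $Q$ is contained in the union of the spherical triangles $\triangle(\overline u_i,\overline u_j,\overline u_k)$ and $\triangle(\overline u_i,\overline u_j,\overline u_l)$. In particular, this convex hull does not contain $\overline u_i$ nor $\overline u_j$.
   Context: A spherical polygon has edges the minimal great-circle arcs between consecutive vertices; no three vertices lie on a common great circle. A set is balanced if not contained in any closed hemisphere; for balanced $Q$, $u_m$ is essential if the vertex set minus $u_m$ is not balanced, nonessential otherwise. Self-intersection: two non-adjacent edges intersect; antipodal intersection: non-adjacent edges $e,f$ with $e\cap(-f)\neq\emptyset$. $\overline u=-u$. *)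

(* Defs.v *)
(* Points of R^3 are row vectors 'rV[R]_3, R : rcfType
   (any real closed field, e.g. the reals). *)
From HB Require Import structures.
From mathcomp Require Import all_boot all_order all_algebra.
Set Implicit Arguments. Unset Strict Implicit. Unset Printing Implicit Defensive.
Import Order.TTheory GRing.Theory Num.Theory.
Local Open Scope ring_scope.

Section Sph.
Variable R : rcfType.
Notation vec := 'rV[R]_3.

Definition dot (x y : vec) : R := \sum_(i < 3) x 0 i * y 0 i.

Definition on_sphere (x : vec) : Prop := dot x x = 1.

Definition in_closed_hemisphere (v x : vec) : Prop := 0 <= dot v x.

Definition balanced (S : vec -> Prop) : Prop :=
  ~ exists v : vec, v != 0 /\ forall x, S x -> in_closed_hemisphere v x.

Definition on_common_great_circle (a b c : vec) : Prop :=
  exists v : vec, v != 0 /\ dot v a = 0 /\ dot v b = 0 /\ dot v c = 0.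

(* the minimal great-circle arc between a and b (a, b not antipodal) *)
Definition arc (a b : vec) (x : vec) : Prop :=
  on_sphere x /\ exists alpha beta : R, 0 <= alpha /\ 0 <= beta /\
    x = alpha *: a + beta *: b.

Definition sph_triangle (a b c : vec) (x : vec) : Prop :=
  on_sphere x /\ exists alpha beta gamma : R,
    [/\ 0 <= alpha, 0 <= beta, 0 <= gamma & x = alpha *: a + beta *: b + gamma *: c].

Definition sph_hull (I : finType) (P : I -> Prop) (p : I -> vec) (x : vec) : Prop :=
  on_sphere x /\ exists c : I -> R,
    (forall m, 0 <= c m) /\ (forall m, ~ P m -> c m = 0) /\
    x = \sum_m c m *: p m.

(* A spherical polygon Q = [u_0, ..., u_{n-1}] : 'I_n -> vec *)
Variable n : nat.
Implicit Types (u : 'I_n -> vec) (a b m : 'I_n).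

Definition vertex_set u (x : vec) : Prop := exists m, x = u m.

Definition vertex_set_minus u m (x : vec) : Prop :=
  exists p, p != m /\ x = u p.

Definition sph_polygon u : Prop :=
  (forall m, on_sphere (u m)) /\
  (forall a b c, a != b -> b != c -> a != c ->
     ~ on_common_great_circle (u a) (u b) (u c)).

(* the m-th edge [u_m, u_{m+1}] (indices mod n) *)
Definition edge u m : vec -> Prop := arc (u m) (u (ordS m)).

Definition nonadjacent a b : bool :=
  [&& a != b, ordS a != b & ordS b != a].

Definition self_intersecting u : Prop :=
  exists a b, nonadjacent a b /\ exists x, edge u a x /\ edge u b x.

Definition antipodal_intersecting u : Prop :=
  exists a b, nonadjacent a b /\ exists x, edge u a x /\ edge u b (- x).

Definition essential u m : Prop := ~ balanced (vertex_set_minus u m).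
Definition nonessential u m : Prop := balanced (vertex_set_minus u m).

End Sph.

(* Main.v *)
Require Import Defs.
From HB Require Import structures.
From mathcomp Require Import all_boot all_order all_algebra.
From mathcomp Require Import ring lra.
From Stdlib Require Import Classical.
Set Implicit Arguments. Unset Strict Implicit. Unset Printing Implicit Defensive.
Import Order.TTheory GRing.Theory Num.Theory.
Local Open Scope ring_scope.

Section Aux.
Variable R : rcfType.
Notation vec := 'rV[R]_3.
Implicit Types (x y v w a b c d : vec).

Lemma dotC x y : dot x y = dot y x.
Proof. by rewrite /dot; apply: eq_bigr => s _; rewrite mulrC. Qed.
Lemma dotDr v x y : dot v (x + y) = dot v x + dot v y.
Proof. by rewrite /dot -big_split; apply: eq_bigr => s _; rewrite mxE mulrDr. Qed.
Lemma dotZr v (k : R) x : dot v (k *: x) = k * dot v x.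
Proof. by rewrite /dot mulr_sumr; apply: eq_bigr => s _; rewrite mxE mulrCA. Qed.
Lemma dotNr v x : dot v (- x) = - dot v x.
Proof. by rewrite -scaleN1r dotZr mulN1r. Qed.
Lemma dot0r v : dot v 0 = 0.
Proof. by rewrite /dot big1 // => s _; rewrite mxE mulr0. Qed.
Lemma dotDl v x y : dot (x + y) v = dot x v + dot y v.
Proof. by rewrite dotC dotDr !(dotC v). Qed.
Lemma dotZl v (k : R) x : dot (k *: x) v = k * dot x v.
Proof. by rewrite dotC dotZr dotC. Qed.
Lemma dotNl v x : dot (- x) v = - dot x v.
Proof. by rewrite dotC dotNr dotC. Qed.
Lemma dot0l v : dot 0 v = 0.
Proof. by rewrite dotC dot0r. Qed.
Lemma dot_sumr (I : finType) (F : I -> vec) v :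
  dot v (\sum_m F m) = \sum_m dot v (F m).
Proof.
apply: (big_morph (dot v)); first by move=> x y; rewrite dotDr.
exact: dot0r.
Qed.

Definition mx3 a b c : 'M[R]_3 :=
  \matrix_(r < 3, s < 3) (if (r : nat) == 0%N then a 0 s else
                          if (r : nat) == 1%N then b 0 s else c 0 s).

Lemma det0_cogreat a b c : \det (mx3 a b c) = 0 -> on_common_great_circle a b c.
Proof.
move=> /eqP; rewrite -det_tr => /det0P [v nz hv]; exists v; split => //.
have E (r : 'I_3) : (v *m (mx3 a b c)^T) 0 r =
   dot v (if (r : nat) == 0%N then a else if (r : nat) == 1%N then b else c).
  rewrite mxE /dot; apply: eq_bigr => s _; rewrite !mxE.
  by case: ifP => _ //; case: ifP.
have := E (@Ordinal 3 0 isT); have := E (@Ordinal 3 1 isT);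
have := E (@Ordinal 3 2 isT); rewrite hv /= !mxE => <- <- <-.
by [].
Qed.

Lemma ncg_det a b c : ~ on_common_great_circle a b c -> \det (mx3 a b c) != 0.
Proof. by move=> h; apply/eqP => /det0_cogreat. Qed.

Lemma perp2 a b : exists2 v, v != 0 & dot v a = 0 /\ dot v b = 0.
Proof.
have : \det (mx3 a b 0) = 0.
  rewrite (expand_det_row _ (@Ordinal 3 2 isT)) big1 // => s _.
  by rewrite !mxE /= mul0r.
by move/det0_cogreat => [v [nz [h1 [h2 _]]]]; exists v.
Qed.

Lemma det_decomp a b c x : \det (mx3 a b c) != 0 ->
  exists al be ga : R, x = al *: a + be *: b + ga *: c.
Proof.
move=> nz.
have U : mx3 a b c \in unitmx by rewrite unitmxE unitfE.
have -> : x = (x *m invmx (mx3 a b c)) *m mx3 a b c by rewrite mulmxKV.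
rewrite mulmx_sum_row !big_ord_recr big_ord0 /= add0r.
do 3 eexists; congr (_ + _ + _); congr (_ *: _); apply/rowP => s;
  by rewrite !mxE.
Qed.

Lemma max2 (x y : R) : exists t, (t = x \/ t = y) /\ x <= t /\ y <= t.
Proof.
case: (leP x y) => h; [exists y | exists x]; split; auto; split => //;
exact: ltW.
Qed.

Lemma max4 (s1 s2 s3 : R) : exists t, (t = 0 \/ t = s1 \/ t = s2 \/ t = s3) /\
  0 <= t /\ s1 <= t /\ s2 <= t /\ s3 <= t.
Proof.
have [t1 [e1 [h1 h1']]] := max2 0 s1.
have [t2 [e2 [h2 h2']]] := max2 s2 s3.
have [t [e [h h']]] := max2 t1 t2.
exists t; split; last by repeat split; lra.
by case: e => ->; [case: e1 | case: e2] => ->; tauto.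
Qed.


Lemma cg_of a b c v : v != 0 -> dot v a = 0 -> dot v b = 0 -> dot v c = 0 ->
  on_common_great_circle a b c.
Proof. by move=> *; exists v. Qed.

Lemma W_contra (A B K L vA vB M0 : vec) :
  dot vA A < 0 -> 0 <= dot vB A -> dot vB B < 0 -> 0 <= dot vA B ->
  dot vA K = 0 -> dot vA L = 0 -> dot vB K = 0 -> dot vB L = 0 ->
  0 <= dot vA M0 -> 0 <= dot vB M0 -> vA != 0 ->
  ~ on_common_great_circle A K L -> ~ on_common_great_circle K L M0 -> False.
Proof.
move=> a1 a2 b2 b1 k1 l1 k2 l2 m1 m2 nzA g1 g2.
set w := dot vB A *: vA - dot vA A *: vB.
have Hw y : dot w y = dot vB A * dot vA y - dot vA A * dot vB y.
  by rewrite /w dotDl dotNl !dotZl.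
case: (eqVneq w 0) => [w0|wn0].
  have hB := Hw B; have hM := Hw M0; rewrite w0 dot0l in hB; rewrite w0 dot0l in hM.
  have h1 : 0 < dot vA A * dot vB B by rewrite nmulr_rgt0.
  have h2 : 0 <= dot vB A * dot vA M0 by rewrite mulr_ge0.
  have h3 : dot vA A * dot vB M0 <= 0 by rewrite mulr_le0_ge0 // ltW.
  have h4 : dot vB A * dot vA M0 = 0 by lra.
  have h5 : dot vB A * dot vA B != 0 by rewrite gt_eqF //; lra.
  have : dot vA M0 = 0.
    move: h4 => /eqP; rewrite mulf_eq0 => /orP [/eqP e|/eqP //].
    by move: h5; rewrite e mul0r eqxx.
  move=> e; apply: g2; exact: (cg_of nzA).
apply: g1; apply: (cg_of wn0); rewrite Hw.
- by rewrite mulrC subrr.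
- by rewrite k1 k2 !mulr0 subrr.
- by rewrite l1 l2 !mulr0 subrr.
Qed.

Lemma sub_case (A B K L vA vB M0 x : vec) (m2 m3 m4 : R) :
  0 <= m2 -> 0 <= m3 -> 0 <= m4 -> x = m2 *: - B + m3 *: - K + m4 *: - L ->
  dot vA A < 0 -> 0 <= dot vA B -> 0 <= dot vA K -> 0 <= dot vA L -> 0 <= dot vA M0 ->
  dot vB B < 0 -> 0 <= dot vB A -> 0 <= dot vB K -> 0 <= dot vB L -> 0 <= dot vB M0 ->
  vA != 0 ->
  ~ on_common_great_circle A K L -> ~ on_common_great_circle B K L ->
  ~ on_common_great_circle K L M0 ->
  0 <= dot vA x -> 0 <= dot vB x ->
  (exists be ga : R, [/\ 0 <= be, 0 <= ga & x = be *: - B + ga *: - K]) \/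
  (exists be de : R, [/\ 0 <= be, 0 <= de & x = be *: - B + de *: - L]).
Proof.
move=> p2 p3 p4 ex aA aB aK aL aM bB bA bK bL bM nzA g1 g2 g3 xA xB.
have [m3z|m3n] := eqVneq m3 0.
  by right; exists m2, m4; split => //; rewrite ex m3z scale0r addr0.
have [m4z|m4n] := eqVneq m4 0.
  by left; exists m2, m3; split => //; rewrite ex m4z scale0r addr0.
exfalso.
rewrite ex !dotDr !dotZr !dotNr in xA xB.
have t2 : 0 <= m2 * dot vA B by rewrite mulr_ge0.
have t3 : 0 <= m3 * dot vA K by rewrite mulr_ge0.
have t4 : 0 <= m4 * dot vA L by rewrite mulr_ge0.
have e3 : m3 * dot vA K = 0 by lra.
have e4 : m4 * dot vA L = 0 by lra.
have e2 : m2 * dot vA B = 0 by lra.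
move: e3 e4 => /eqP; rewrite mulf_eq0 (negPf m3n) /= => /eqP k1 /eqP.
rewrite mulf_eq0 (negPf m4n) /= => /eqP l1.
have [m2z|m2n] := eqVneq m2 0.
  rewrite m2z !mul0r ?oppr0 ?add0r ?addr0 in xB.
  have s3 : 0 <= m3 * dot vB K by rewrite mulr_ge0.
  have s4 : 0 <= m4 * dot vB L by rewrite mulr_ge0.
  have f3 : m3 * dot vB K = 0 by lra.
  have f4 : m4 * dot vB L = 0 by lra.
  move: f3 f4 => /eqP; rewrite mulf_eq0 (negPf m3n) /= => /eqP k2 /eqP.
  rewrite mulf_eq0 (negPf m4n) /= => /eqP l2.
  exact: (W_contra aA bA bB aB k1 l1 k2 l2 aM bM nzA g1 g3).
move: e2 => /eqP; rewrite mulf_eq0 (negPf m2n) /= => /eqP b1.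
by apply: g2; apply: (cg_of nzA).
Qed.


Lemma cover (A B K L vA vB M0 x : vec) (p q r a1 a2 a3 : R) :
  p < 0 -> q < 0 -> r < 0 -> L = p *: A + q *: B + r *: K ->
  x = a1 *: A + a2 *: B + a3 *: K ->
  dot vA A < 0 -> 0 <= dot vA B -> 0 <= dot vA K -> 0 <= dot vA L -> 0 <= dot vA M0 ->
  dot vB B < 0 -> 0 <= dot vB A -> 0 <= dot vB K -> 0 <= dot vB L -> 0 <= dot vB M0 ->
  vA != 0 -> vB != 0 ->
  ~ on_common_great_circle A K L -> ~ on_common_great_circle B K L ->
  ~ on_common_great_circle K L M0 ->
  0 <= dot vA x -> 0 <= dot vB x ->
  (exists al be ga : R, [/\ 0 <= al, 0 <= be, 0 <= ga &
      x = al *: - A + be *: - B + ga *: - K]) \/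
  (exists al be ga : R, [/\ 0 <= al, 0 <= be, 0 <= ga &
      x = al *: - A + be *: - B + ga *: - L]).
Proof.
move=> hp hq hr eL ex aA aB aK aL aM bB bA bK bL bM nzA nzB g1 g2 g3 xA xB.
pose a := a1 / p; pose b := a2 / q; pose c := a3 / r.
have Hid t : x = ((a + t) * (- p)) *: - A + ((b + t) * (- q)) *: - B
                 + ((c + t) * (- r)) *: - K + t *: - L.
  rewrite ex eL /a /b /c; apply/rowP => s; rewrite !mxE; field.
  by rewrite !ltr0_neq0.
have [t [et [h0 [ha [hb hc]]]]] := max4 (- a) (- b) (- c).
have c1 : 0 <= (a + t) * (- p) by apply: mulr_ge0; lra.
have c2 : 0 <= (b + t) * (- q) by apply: mulr_ge0; lra.
have c3 : 0 <= (c + t) * (- r) by apply: mulr_ge0; lra.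
case: et => [t0|[ta|[tb|tc]]].
- left; exists ((a + t) * (- p)), ((b + t) * (- q)), ((c + t) * (- r)).
  by split => //; rewrite {1}(Hid t) t0 scale0r addr0.
- have e : a + t = 0 by lra.
  have ex' : x = ((b + t) * (- q)) *: - B + ((c + t) * (- r)) *: - K + t *: - L.
    by rewrite {1}(Hid t) e mul0r scale0r add0r.
  have := sub_case c2 c3 h0 ex' aA aB aK aL aM bB bA bK bL bM nzA g1 g2 g3 xA xB.
  case => [[be [ga [p1 p2 ->]]]|[be [de [p1 p2 ->]]]]; [left|right];
    by exists 0, be; eexists; split; last (by rewrite scale0r add0r); rewrite ?lexx.
- have e : b + t = 0 by lra.
  have ex' : x = ((a + t) * (- p)) *: - A + ((c + t) * (- r)) *: - K + t *: - L.
    by rewrite {1}(Hid t) e mul0r scale0r addr0.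
  have := sub_case c1 c3 h0 ex' bB bA bK bL bM aA aB aK aL aM nzB g2 g1 g3 xB xA.
  case => [[al [ga [p1 p2 ->]]]|[al [de [p1 p2 ->]]]]; [left|right];
    by exists al, 0; eexists; split; last (by rewrite scale0r addr0); rewrite ?lexx.
- have e : c + t = 0 by lra.
  right; exists ((a + t) * (- p)), ((b + t) * (- q)), t.
  by split => //; rewrite {1}(Hid t) e mul0r scale0r addr0.
Qed.

Lemma coef_neg (a b c d : vec) (p q r : R) : ~ on_common_great_circle a b c ->
  (forall v, v != 0 -> 0 <= dot v a -> 0 <= dot v b -> 0 <= dot v c ->
     0 <= dot v d -> False) ->
  d = p *: a + q *: b + r *: c -> p < 0.
Proof.
move=> g nh ed; have [v nz [vb vc]] := perp2 b c.
have va : dot v a != 0 by apply/eqP => e; apply: g; exact: (cg_of nz).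
rewrite ltNge; apply/negP => hp.
have key w : w != 0 -> 0 < dot w a -> dot w b = 0 -> dot w c = 0 -> False.
  move=> nw wa wb wc; apply: (nh w nw); first exact: ltW.
  - by rewrite wb.
  - by rewrite wc.
  rewrite ed !dotDr !dotZr wb wc !mulr0 !addr0; apply: mulr_ge0 => //.
  exact: ltW.
move: va; rewrite neq_lt => /orP [h|h].
- apply: (key (- v)); rewrite ?oppr_eq0 ?dotNl ?vb ?vc ?oppr0 ?oppr_gt0 //.
- exact: key v nz h vb vc.
Qed.

Lemma fresh4 (n : nat) (a b c d : 'I_n) : (4 < n)%N ->
  exists m : 'I_n, [/\ m != a, m != b, m != c & m != d].
Proof.
move=> hn.
case: (pickP (fun m : 'I_n => m \notin [:: a; b; c; d])) => [m hm|h].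
  by exists m; move: hm; rewrite !inE !negb_or => /and4P.
have h2 : (#|'I_n| <= #|[:: a; b; c; d]|)%N.
  apply: subset_leq_card; apply/subsetP => m _.
  by move: (h m) => /= /negbFE.
have h3 := leq_trans h2 (card_size [:: a; b; c; d]).
by rewrite card_ord /= in h3; rewrite ltnNge h3 in hn.
Qed.

End Aux.

Lemma hemi_of_ess (R : rcfType) n (u : 'I_n -> 'rV[R]_3) m : essential u m ->
  exists v, v != 0 /\ forall p, p != m -> 0 <= dot v (u p).
Proof.
rewrite /essential /balanced => /NNPP [v [nz H]]; exists v; split => // p hp.
by apply: H; exists p.
Qed.

Lemma ess_neg (R : rcfType) n (u : 'I_n -> 'rV[R]_3) m v :
  balanced (vertex_set u) -> v != 0 ->
  (forall p, p != m -> 0 <= dot v (u p)) -> dot v (u m) < 0.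
Proof.
move=> hb nz H; rewrite ltNge; apply/negP => h; apply: hb; exists v.
split => // x [p ->]; rewrite /in_closed_hemisphere.
by case: (eqVneq p m) => [->|ne] //; exact: H.
Qed.

Lemma antip (R : rcfType) n (u : 'I_n -> 'rV[R]_3) i j vj : (4 < n)%N ->
  sph_polygon u -> vj != 0 -> (forall p, p != j -> 0 <= dot vj (u p)) ->
  i != j -> (forall m, nonessential u m -> m != i /\ m != j) ->
  ~ sph_hull (nonessential u) u (- u i).
Proof.
move=> hn [Hs Hg] nz Hv ij Hne [_ [c [c0 [cP hx]]]].
have term m : 0 <= c m * dot vj (u m).
  case: (classic (nonessential u m)) => h.
    by apply: mulr_ge0 => //; apply: Hv; case: (Hne m h).
  by rewrite cP // mul0r.
have ds : dot vj (- u i) = \sum_m c m * dot vj (u m).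
  by rewrite hx dot_sumr; apply: eq_bigr => m _; rewrite dotZr.
have vi0 : 0 <= dot vj (u i) := Hv i ij.
have s0 : 0 <= \sum_m c m * dot vj (u m) by apply: sumr_ge0 => m _.
have vie : dot vj (u i) = 0 by rewrite dotNr in ds; lra.
have sz : \sum_m c m * dot vj (u m) = 0 by rewrite -ds dotNr vie oppr0.
have tz m : c m * dot vj (u m) = 0.
  by apply: (psumr_eq0P _ sz) => // m' _; exact: term.
have ne_of m : c m != 0 -> nonessential u m.
  by move=> h; apply: NNPP => hn'; move: h; rewrite cP ?eqxx.
have dz m : c m != 0 -> dot vj (u m) = 0.
  by move=> h; move: (tz m) => /eqP; rewrite mulf_eq0 (negPf h) => /eqP.
have [m1 hm1] : exists m1, c m1 != 0.
  apply: NNPP => H.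
  have ui0 : u i = 0.
    apply: oppr_inj; rewrite oppr0 hx big1 // => m _.
    have -> : c m = 0 by apply: NNPP => h; apply: H; exists m; apply/eqP.
    exact: scale0r.
  by have := Hs i; rewrite /on_sphere ui0 dot0l => /eqP; rewrite eq_sym oner_eq0.
have [m1i _] := Hne m1 (ne_of m1 hm1).
have others m : m != m1 -> c m = 0.
  move=> hm; apply/eqP; apply: contraT => hc.
  have [mi _] := Hne m (ne_of m hc).
  exfalso; apply: (Hg i m1 m); rewrite 1?eq_sym //.
  exact: (cg_of nz vie (dz m1 hm1) (dz m hc)).
have eA : - u i = c m1 *: u m1.
  rewrite hx (bigD1 m1) //= big1 ?addr0 // => m hm.
  by rewrite others // scale0r.
have [p [p1 p2 _ _]] := fresh4 i m1 i i hn.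
have [v nzv [v1 v2]] := perp2 (u m1) (u p).
apply: (Hg i m1 p); rewrite 1?eq_sym //.
apply: (cg_of nzv) => //.
have : dot v (- u i) = 0 by rewrite eA dotZr v1 mulr0.
by rewrite dotNr => /eqP; rewrite oppr_eq0 => /eqP.
Qed.

Theorem lemma8 (R : rcfType) (n : nat) (u : 'I_n -> 'rV[R]_3)
    (i j k l : 'I_n) :
  (7 <= n)%N ->
  sph_polygon u ->
  balanced (vertex_set u) ->
  ~ self_intersecting u ->
  ~ antipodal_intersecting u ->
  i != j -> essential u i -> essential u j ->
  (forall m, essential u m -> m = i \/ m = j) ->
  nonessential u k -> nonessential u l ->
  balanced (fun x => x = u i \/ x = u j \/ x = u k \/ x = u l) ->
  (forall x, sph_hull (nonessential u) u x ->
     sph_triangle (- u i) (- u j) (- u k) x \/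
     sph_triangle (- u i) (- u j) (- u l) x) /\
  ~ sph_hull (nonessential u) u (- u i) /\
  ~ sph_hull (nonessential u) u (- u j).
Proof.
move=> hn Hpol Hbal Hnsi Hnai ij Hei Hej Honly Hk Hl H4.
have [Hs Hg] := Hpol.
have hn4 : (4 < n)%N by apply: leq_trans hn.
have ne_ij m : nonessential u m -> m != i /\ m != j.
  by move=> h; split; apply/eqP => e; [apply: Hei | apply: Hej]; rewrite -e.
have [vi [nzi Hvi]] := hemi_of_ess Hei.
have [vj [nzj Hvj]] := hemi_of_ess Hej.
have ai := ess_neg Hbal nzi Hvi.
have bj := ess_neg Hbal nzj Hvj.
have [ki kj] := ne_ij k Hk.
have [li lj] := ne_ij l Hl.
have ji : j != i by rewrite eq_sym.
have NH : forall v, v != 0 -> 0 <= dot v (u i) -> 0 <= dot v (u j) ->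
    0 <= dot v (u k) -> 0 <= dot v (u l) -> False.
  move=> v nz h1 h2 h3 h4; apply: H4; exists v; split => // x.
  by case=> [->|[->|[->|->]]].
have kl : k != l.
  apply/eqP => e; rewrite -e in NH.
  have [v nz [v1 v2]] := perp2 (u i) (u j).
  case: (lerP 0 (dot v (u k))) => h.
    by apply: (NH v nz); rewrite ?v1 ?v2.
  apply: (NH (- v)); rewrite ?oppr_eq0 ?dotNl ?v1 ?v2 ?oppr0 //;
    by rewrite oppr_ge0 ltW.
have gABK : ~ on_common_great_circle (u i) (u j) (u k).
  by apply: Hg; rewrite 1?eq_sym.
have [p [q [r eL]]] := det_decomp (u l) (ncg_det gABK).
have hp := coef_neg gABK NH eL.
have hq : q < 0.
  apply: (coef_neg (a := u j) (b := u i) (c := u k) (d := u l) (q := p) (r := r)).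
  - move=> [v [nz [h1 [h2 h3]]]]; apply: gABK; exists v; tauto.
  - move=> v nz h1 h2 h3 h4; exact: NH v nz h2 h1 h3 h4.
  - by rewrite eL (addrC (p *: _)).
have hr : r < 0.
  apply: (coef_neg (a := u k) (b := u i) (c := u j) (d := u l) (q := p) (r := q)).
  - move=> [v [nz [h1 [h2 h3]]]]; apply: gABK; exists v; tauto.
  - move=> v nz h1 h2 h3 h4; exact: NH v nz h2 h3 h1 h4.
  - by rewrite eL addrC addrA.
have [m0 [m0i m0j m0k m0l]] := fresh4 i j k l hn4.
have ik : i != k by rewrite eq_sym.
have jk : j != k by rewrite eq_sym.
have il : i != l by rewrite eq_sym.
have jl : j != l by rewrite eq_sym.
have lm0 : l != m0 by rewrite eq_sym.
have km0 : k != m0 by rewrite eq_sym.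
have g1 : ~ on_common_great_circle (u i) (u k) (u l).
  by apply: Hg.
have g2 : ~ on_common_great_circle (u j) (u k) (u l).
  by apply: Hg.
have g3 : ~ on_common_great_circle (u k) (u l) (u m0).
  by apply: Hg.
split.
  move=> x [xs [c [c0 [cP hx]]]].
  have dx v (hv : forall m, nonessential u m -> 0 <= dot v (u m)) : 0 <= dot v x.
    rewrite hx dot_sumr; apply: sumr_ge0 => m _; rewrite dotZr.
    case: (classic (nonessential u m)) => h.
      by apply: mulr_ge0 => //; exact: hv.
    by rewrite cP // mul0r.
  have xA : 0 <= dot vi x by apply: dx => m h; apply: Hvi; case: (ne_ij m h).
  have xB : 0 <= dot vj x by apply: dx => m h; apply: Hvj; case: (ne_ij m h).
  have [a1 [a2 [a3 ex]]] := det_decomp x (ncg_det gABK).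
  have := cover hp hq hr eL ex ai (Hvi j ji) (Hvi k ki) (Hvi l li) (Hvi m0 m0i)
    bj (Hvj i ij) (Hvj k kj) (Hvj l lj) (Hvj m0 m0j) nzi nzj g1 g2 g3 xA xB.
  case => [[al [be [ga [h1 h2 h3 h4]]]]|[al [be [ga [h1 h2 h3 h4]]]]];
    [left|right]; split => //; exists al, be, ga; by split.
split.
  apply: (antip hn4 Hpol nzj Hvj ij) => m h; exact: ne_ij.
apply: (antip hn4 Hpol nzi Hvi ji) => m h.
by have [a b] := ne_ij m h; split.
Qed.
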